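(* Let $\tau\in\mathbb{H}$ (the upper half-plane) and let $\Lambda=\langle 1,\tau\rangle_\mathbb{Z}$. (1) The lattice $\Lambda$ is isogenous to $\overline{\Lambda}$ if and only if $\tau$ belongs to a hyperbolic geodesic in $\mathbb{H}$ with both endpoints in $\mathbb{P}^1(\mathbb{Q})$, or with endpoints that are conjugate real quadratic irrationals. (2) There exists a non-zero element of $\mathrm{Isog}(\Lambda,\overline{\Lambda})$ with rational absolute value if and only if $\tau$ belongs to a hyperbolic geodesic in $\mathbb{H}$ with both endpoints in $\mathbb{P}^1(\mathbb{Q})$.
   Context: Geodesics in $\mathbb{H}$ are vertical half-lines and semicircles centered on the real axis; their endpoints lie in $\mathbb{P}^1(\mathbb{R})=\mathbb{R}\cup\{\infty\}$. $\langle 1,\tau\rangle_\mathbb{Z}$ is the $\mathbb{Z}$-module generated by $1,\tau$, and $\overline{\Lambda}$ the complex conjugate lattice. For lattices $\Lambda_1,\Lambda_2$, $\mathrm{Isog}(\Lambda_1,\Lambda_2)=\{\alpha\in\mathbb{C}:\alpha\Lambda_1\subset\Lambda_2\}$, and $\Lambda_1$ is isogenous to $\Lambda_2$ if this group is non-zero. *)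

(* Defs.v *)
From HB Require Import structures.
From mathcomp Require Import all_boot all_order all_algebra.
From mathcomp Require Import reals complex.
Set Implicit Arguments. Unset Strict Implicit. Unset Printing Implicit Defensive.
Import Order.TTheory GRing.Theory Num.Theory.
Local Open Scope ring_scope.

Section Defs.
Variable R : realType.
Local Notation C := R[i].

Definition in_upper_half_plane (z : C) : Prop := 0 < complex.Im z.

Definition in_lattice (w1 w2 z : C) : Prop :=
  exists m n : int, z = m%:~R * w1 + n%:~R * w2.

Definition isog (w1 w2 w1' w2' alpha : C) : Prop :=
  forall z, in_lattice w1 w2 z -> in_lattice w1' w2' (alpha * z).

Definition isogenous (w1 w2 w1' w2' : C) : Prop :=
  exists alpha, alpha != 0 /\ isog w1 w2 w1' w2' alpha.

(* points of P^1(R) = R u {oo}; None stands for oo *)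
Definition P1R := option R.

Definition is_rat (x : R) : Prop := exists q : rat, x = ratr q.

Definition in_P1Q (e : P1R) : Prop :=
  match e with None => True | Some x => is_rat x end.

(* z lies on the hyperbolic geodesic of H with endpoints e1 <> e2 in P^1(R):
   a vertical half-line if one endpoint is oo, otherwise the semicircle
   centred on the real axis with diameter [e1, e2]. *)
Definition on_geodesic (e1 e2 : P1R) (z : C) : Prop :=
  in_upper_half_plane z /\
  match e1, e2 with
  | None, None => False
  | Some a, None | None, Some a => complex.Re z = a
  | Some a, Some b => a != b /\
      (complex.Re z - (a + b) / 2%:R) ^+ 2 + (complex.Im z) ^+ 2
        = ((a - b) / 2%:R) ^+ 2
  end.

Definition conj_real_quad_irr (a b : R) : Prop :=
  ~ is_rat a /\
  exists p q d : rat, 0 <= d /\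
    a = ratr p + ratr q * Num.sqrt (ratr d) /\
    b = ratr p - ratr q * Num.sqrt (ratr d).

Definition quad_conj_endpoints (e1 e2 : P1R) : Prop :=
  match e1, e2 with
  | Some a, Some b => conj_real_quad_irr a b
  | _, _ => False
  end.

End Defs.

(* Main.v *)
Require Import Defs.
From HB Require Import structures.
From mathcomp Require Import all_boot all_order all_algebra.
From mathcomp Require Import reals complex.
From mathcomp Require Import ring lra.
From Stdlib Require Import Classical.
Import Order.TTheory GRing.Theory Num.Theory.
Local Open Scope ring_scope.

Section S.
Variable R : realType.

Lemma is_rat_ratr (q : rat) : is_rat (ratr q : R). Proof. by exists q. Qed.
Lemma is_rat_int (m : int) : is_rat (m%:~R : R). Proof. by exists m%:~R; rewrite ratr_int. Qed.
Lemma is_ratD (u v : R) : is_rat u -> is_rat v -> is_rat (u + v).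
Proof. by move=> [p ->] [q ->]; exists (p + q); rewrite rmorphD. Qed.
Lemma is_ratN (u : R) : is_rat u -> is_rat (- u).
Proof. by move=> [p ->]; exists (- p); rewrite rmorphN. Qed.
Lemma is_ratM (u v : R) : is_rat u -> is_rat v -> is_rat (u * v).
Proof. by move=> [p ->] [q ->]; exists (p * q); rewrite rmorphM. Qed.
Lemma is_ratV (u : R) : is_rat u -> is_rat (u^-1).
Proof. by move=> [p ->]; exists (p^-1); rewrite fmorphV. Qed.

Lemma intC (m : int) : (m%:~R : R[i]) = Complex (m%:~R : R) 0.
Proof. by rewrite complexr0 rmorph_int. Qed.

Lemma ratr_numden (q : rat) : (ratr q : R) = (numq q)%:~R / (denq q)%:~R.
Proof.
by rewrite -[q in LHS]divq_num_den fmorph_div !rmorph_int.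
Qed.
End S.
Section T.
Set Implicit Arguments.
Variable R : realType.
Variables (x y : R).
Hypothesis hy : 0 < y.

Definition Rel (a b c : int) := b%:~R * (x^+2 + y^+2) + 2 * a%:~R * x = c%:~R :> R.

Lemma isog_char alpha : isog 1 (Complex x y) 1 (conjc (Complex x y)) alpha <->
  exists a b c, Rel a b c /\ alpha = a%:~R + b%:~R * conjc (Complex x y).
Proof.
split.
- move=> H.
  have [a [b eab]] : in_lattice 1 (x -i* y)%C (alpha * 1).
    by apply: H; exists 1, 0; rewrite (_ : 0%:~R = 0) // (_ : 1%:~R = 1) // mulr1 mul0r addr0.
  have [c [d ecd]] : in_lattice 1 (x -i* y)%C (alpha * (Complex x y)).
    by apply: H; exists 0, 1; rewrite (_ : 0%:~R = 0) // (_ : 1%:~R = 1) // mul0r add0r mul1r.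
  rewrite mulr1 in eab.
  exists a, b, c; split; last by rewrite eab mulr1.
  move: ecd; rewrite eab !mulr1 !intC; simpc.
  case=> Hre Him.
  have hd : (d%:~R : R) = - a%:~R.
    apply: (mulIf (x := y)); first by rewrite gt_eqF.
    by lra.
  rewrite /Rel; rewrite hd in Hre. lra.
- move=> [a [b [c [hr ->]]]] z [m [n ->]].
  exists (m * a + n * c), (m * b - n * a).
  rewrite !mulr1 !(intrD, intrM, intrN) !intC; simpc.
  rewrite /Rel in hr; rewrite -hr; congr (_ +i* _)%C; ring.
Qed.

Lemma nz_char a b : a%:~R + b%:~R * conjc (Complex x y) != 0 <-> (a != 0) \/ (b != 0).
Proof.
split => [H | H].
- case: (eqVneq a 0) => [ea|]; last by left.
  case: (eqVneq b 0) => [eb|]; last by right.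
  by move: H; rewrite ea eb mul0r addr0 eqxx.
- apply/eqP => E; move: E; rewrite !intC; simpc; case => E1 E2.
  have hb : (b%:~R : R) = 0.
    by apply: (mulIf (x := y)); [rewrite gt_eqF | lra].
  have ha : (a%:~R : R) = 0 by rewrite hb mul0r addr0 in E1.
  move/eqP: ha; rewrite intr_eq0 => /eqP ha.
  move/eqP: hb; rewrite intr_eq0 => /eqP hb.
  by case: H; rewrite ?ha ?hb eqxx.
Qed.

Lemma norm_char a b c : Rel a b c ->
  `|a%:~R + b%:~R * conjc (Complex x y)| = (Num.sqrt (a%:~R^+2 + b%:~R * c%:~R))%:C%C
  /\ a%:~R^+2 + b%:~R * c%:~R = (a%:~R + b%:~R * x)^+2 + (b%:~R * y)^+2 :> R.
Proof.
rewrite /Rel => hr.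
have E : a%:~R^+2 + b%:~R * c%:~R = (a%:~R + b%:~R * x)^+2 + (b%:~R * y)^+2 :> R.
  by rewrite -hr; ring.
split; last exact: E.
by rewrite !intC; simpc; rewrite E sqrrN.
Qed.

Lemma is_rat_nat (n : nat) : is_rat (n%:R : R).
Proof. by exists n%:R; rewrite rmorph_nat. Qed.

Lemma geo_of_rel a b c : Rel a b c -> (a != 0) \/ (b != 0) ->
  (exists e1 e2 : P1R R, on_geodesic e1 e2 (Complex x y) /\
     ((in_P1Q e1 /\ in_P1Q e2) \/ quad_conj_endpoints e1 e2))
  /\ ((exists w : rat, a%:~R^+2 + b%:~R * c%:~R = ratr w ^+ 2 :> R) ->
     exists e1 e2 : P1R R, on_geodesic e1 e2 (Complex x y) /\ in_P1Q e1 /\ in_P1Q e2).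
Proof.
move=> hr hnz.
have [_ ED] := @norm_char a b c hr.
case: (eqVneq b 0) => [eb|nb].
  have na : a != 0 by case: hnz => //; rewrite eb eqxx.
  have naR : (a%:~R : R) != 0 by rewrite intr_eq0.
  have hx : x = c%:~R / (2 * a%:~R).
    by move: hr; rewrite /Rel eb mul0r add0r => <-; field; rewrite ?naR.
  have rx : is_rat x.
    by rewrite hx; apply: is_ratM; [apply: is_rat_int | apply: is_ratV; apply: is_ratM; [apply: is_rat_nat | apply: is_rat_int]].
  have G : on_geodesic (Some x) None (Complex x y) by split.
  split; first by exists (Some x), None; split; [exact: G | left].
  by move=> _; exists (Some x), None.
have nbR : (b%:~R : R) != 0 by rewrite intr_eq0.
set D := a%:~R^+2 + b%:~R * c%:~R : R.
have Dpos : 0 < D.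
  have h1 := sqr_ge0 (a%:~R + b%:~R * x : R).
  have h2 : 0 < (b%:~R * y) ^+ 2 :> R.
    by rewrite lt_def sqr_ge0 andbT sqrf_eq0 mulf_eq0 negb_or nbR (gt_eqF hy).
  rewrite /D ED; lra.
set s := Num.sqrt D.
have spos : 0 < s by rewrite sqrtr_gt0.
have hs : s ^+ 2 = D by rewrite sqr_sqrtr // ltW.
have G : on_geodesic (Some ((- a%:~R + s) / b%:~R)) (Some ((- a%:~R - s) / b%:~R)) (Complex x y).
  split; first by [].
  split.
    apply/eqP => E.
    have := congr1 (fun t => t * b%:~R) E; rewrite /= !divfK //; lra.
  have key : (x - ((- a%:~R + s) / b%:~R + (- a%:~R - s) / b%:~R) / 2%:R) ^+ 2 + y ^+ 2
     - (((- a%:~R + s) / b%:~R - (- a%:~R - s) / b%:~R) / 2%:R) ^+ 2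
     = ((a%:~R + b%:~R * x)^+2 + (b%:~R * y)^+2 - s^+2) / (b%:~R ^+ 2).
    by field; rewrite ?nbR.
  by apply/eqP; rewrite -subr_eq0 /= key hs -ED subrr mul0r.
have e2e1 : (- a%:~R - s) / b%:~R = - ((- a%:~R + s) / b%:~R) + (- (2%:R * a%:~R)) / b%:~R.
  by field; rewrite ?nbR.
have rat_e2 : is_rat ((- a%:~R + s) / b%:~R) -> is_rat ((- a%:~R - s) / b%:~R).
  move=> h; rewrite e2e1; apply: is_ratD; first exact: is_ratN.
  apply: is_ratM; last by apply: is_ratV; apply: is_rat_int.
  by apply: is_ratN; apply: is_ratM; [apply: is_rat_nat | apply: is_rat_int].
split.
  exists (Some ((- a%:~R + s) / b%:~R)), (Some ((- a%:~R - s) / b%:~R)); split; first exact: G.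
  case: (classic (is_rat ((- a%:~R + s) / b%:~R))) => h.
    by left; split; [exact: h | exact: rat_e2].
  right; split; first exact: h.
  have [p hp] : is_rat (- a%:~R / b%:~R : R).
    by apply: is_ratM; [apply: is_ratN; apply: is_rat_int | apply: is_ratV; apply: is_rat_int].
  have [q hq] : is_rat (b%:~R^-1 : R).
    by apply: is_ratV; apply: is_rat_int.
  have [d hd] : is_rat D.
    by rewrite /D expr2; apply: is_ratD; apply: is_ratM; apply: is_rat_int.
  exists p, q, d; split.
    by rewrite -(ler0q R) -hd ltW.
  by rewrite -hp -hq -hd -/s; split; field; rewrite ?nbR.
move=> [w hw].
have sw : s = ratr `|w|.
  by rewrite /s -/D hw sqrtr_sqr ratr_norm.
have h : is_rat ((- a%:~R + s) / b%:~R).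
  rewrite sw; apply: is_ratM; last by apply: is_ratV; apply: is_rat_int.
  by apply: is_ratD; [apply: is_ratN; apply: is_rat_int | apply: is_rat_ratr].
exists (Some ((- a%:~R + s) / b%:~R)), (Some ((- a%:~R - s) / b%:~R)); split; first exact: G.
by split; [exact: h | exact: rat_e2].
Qed.

Lemma rel_vert : is_rat x -> exists a b c, ((a != 0) \/ (b != 0)) /\ Rel a b c /\
   exists w : rat, a%:~R^+2 + b%:~R * c%:~R = ratr w ^+ 2 :> R.
Proof.
move=> [q hq].
exists (denq q), 0, (2 * numq q); split; first by left; exact: denq_neq0.
have dR : ((denq q)%:~R : R) != 0 by rewrite intr_eq0 denq_neq0.
split.
  rewrite /Rel hq ratr_numden intrM mul0r add0r.
  by field; rewrite ?dR.
by exists (denq q)%:~R; rewrite ratr_int mul0r addr0.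
Qed.

Lemma rel_of_UV (U V : rat) : x^+2 + y^+2 + ratr U * x + ratr V = 0 ->
  exists a b c, b != 0 /\ Rel a b c /\
   a%:~R^+2 + b%:~R * c%:~R = b%:~R^+2 * (ratr U ^+ 2 / 4%:R - ratr V) :> R.
Proof.
move=> h.
exists (numq U * denq V), (2 * denq U * denq V), (- (2 * denq U * numq V)).
have dU : ((denq U)%:~R : R) != 0 by rewrite intr_eq0 denq_neq0.
have dV : ((denq V)%:~R : R) != 0 by rewrite intr_eq0 denq_neq0.
split; first by rewrite !mulf_neq0 ?denq_neq0.
rewrite /Rel !(intrM, intrN) !ratr_numden.
rewrite !ratr_numden in h.
have hT : x^+2 + y^+2 = - ((numq U)%:~R / (denq U)%:~R * x) - (numq V)%:~R / (denq V)%:~R by lra.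
split.
  by rewrite hT; field; rewrite ?dU ?dV.
by field; rewrite ?dU ?dV.
Qed.

Lemma rel_of_geo (e1 e2 : P1R R) : on_geodesic e1 e2 (Complex x y) ->
  ((in_P1Q e1 /\ in_P1Q e2) \/ quad_conj_endpoints e1 e2) ->
  exists a b c, ((a != 0) \/ (b != 0)) /\ Rel a b c /\
   (in_P1Q e1 /\ in_P1Q e2 -> exists w : rat, a%:~R^+2 + b%:~R * c%:~R = ratr w ^+ 2 :> R).
Proof.
case: e1 => [r1|]; case: e2 => [r2|] [_ G] H //=.
- case: G => neq circ.
  have hT : x^+2 + y^+2 - (r1 + r2) * x + r1 * r2 = 0.
    have E : x^+2 + y^+2 - (r1 + r2) * x + r1 * r2 =
      (x - (r1 + r2) / 2%:R) ^+ 2 + y ^+ 2 - ((r1 - r2) / 2%:R) ^+ 2 by field.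
    by rewrite E circ subrr.
  case: H => [[[q1 h1] [q2 h2]] | [nr1 [p [q [d [hd0 [h1 h2]]]]]]].
    have hU : ratr (- (q1 + q2)) = - (r1 + r2) :> R by rewrite h1 h2 rmorphN rmorphD.
    have hV : ratr (q1 * q2) = r1 * r2 :> R by rewrite h1 h2 rmorphM.
    have [a [b [c [nb [hr hD]]]]] := @rel_of_UV (- (q1 + q2)) (q1 * q2)
      ltac:(rewrite hU hV; lra).
    exists a, b, c; split; first by right.
    split; first exact: hr.
    move=> _; exists (b%:~R * (q1 - q2) / 2%:R).
    have hw : ratr (b%:~R * (q1 - q2) / 2%:R) = b%:~R * (r1 - r2) / 2%:R :> R.
      by rewrite h1 h2 !(rmorphM, rmorphB, fmorphV, rmorph_int, rmorph_nat).
    rewrite hD hU hV hw.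
    by field.
  have hUV : x ^+ 2 + y ^+ 2 + ratr (- (2%:R * p)) * x + ratr (p ^+ 2 - q ^+ 2 * d) = 0.
    have -> : ratr (- (2%:R * p)) = - (2%:R * ratr p) :> R by rewrite !(rmorphN, rmorphM, rmorph_nat).
    have -> : ratr (p ^+ 2 - q ^+ 2 * d) = ratr p ^+ 2 - ratr q ^+ 2 * ratr d :> R
      by rewrite !(rmorphB, rmorphM, rmorphXn).
    have hs : Num.sqrt (ratr d) ^+ 2 = ratr d :> R by rewrite sqr_sqrtr // ler0q.
    rewrite -hs; move: hT; rewrite h1 h2 => hT.
    have E : x ^+ 2 + y ^+ 2 + - (2%:R * ratr p) * x + (ratr p ^+ 2 - ratr q ^+ 2 * Num.sqrt (ratr d) ^+ 2)
       = x ^+ 2 + y ^+ 2 -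
       (ratr p + ratr q * Num.sqrt (ratr d) + (ratr p - ratr q * Num.sqrt (ratr d))) * x +
       (ratr p + ratr q * Num.sqrt (ratr d)) * (ratr p - ratr q * Num.sqrt (ratr d)) :> R by ring.
    by rewrite E hT.
  have [a [b [c [nb [hr hD]]]]] := @rel_of_UV (- (2%:R * p)) (p ^+ 2 - q ^+ 2 * d) hUV.
  exists a, b, c; split; first by right.
  split; first exact: hr.
  by move=> [].
- move: G => /= G; rewrite /= -G in H.
  have rx : is_rat x by case: H => [[]|].
  have [a [b [c [? [? [w ?]]]]]] := rel_vert rx.
  by exists a, b, c; split => //; split => // _; exists w.
- move: G => /= G; rewrite /= -G in H.
  have rx : is_rat x by case: H => [[]|].
  have [a [b [c [? [? [w ?]]]]]] := rel_vert rx.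
  by exists a, b, c; split => //; split => // _; exists w.
Qed.
End T.
Theorem proposition3p1p1 (R : realType) (tau : R[i]) :
  in_upper_half_plane tau ->
  (isogenous 1 tau 1 (conjc tau) <->
     exists e1 e2 : P1R R, on_geodesic e1 e2 tau /\
       ((in_P1Q e1 /\ in_P1Q e2) \/ quad_conj_endpoints e1 e2)) /\
  ((exists alpha : R[i], alpha != 0 /\ isog 1 tau 1 (conjc tau) alpha /\
       exists q : rat, `|alpha| = ratr q) <->
     exists e1 e2 : P1R R, on_geodesic e1 e2 tau /\ in_P1Q e1 /\ in_P1Q e2).
Proof.
case: tau => x y; rewrite /in_upper_half_plane /= => hy.
have ratrC : forall q : rat, (ratr q : R[i]) = ((ratr q : R)%:C)%C.
  by move=> q; rewrite fmorph_rat.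
split; split.
- move=> [alpha [nz hi]].
  have [a [b [c [hr ea]]]] := (isog_char R x y hy alpha).1 hi.
  rewrite ea in nz.
  exact: (geo_of_rel hy hr ((nz_char R x y hy a b).1 nz)).1.
- move=> [e1 [e2 [G H]]].
  have [a [b [c [nz [hr _]]]]] := rel_of_geo G H.
  exists (a%:~R + b%:~R * conjc (Complex x y)); split.
    exact: (nz_char R x y hy a b).2 nz.
  by apply/(isog_char R x y hy); exists a, b, c.
- move=> [alpha [nz [hi [q hq]]]].
  have [a [b [c [hr ea]]]] := (isog_char R x y hy alpha).1 hi.
  rewrite ea in nz hq.
  have [hn ED] := norm_char hr.
  apply: (geo_of_rel hy hr ((nz_char R x y hy a b).1 nz)).2.
  exists q.
  move: hq; rewrite hn ratrC => /complexI <-.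
  by rewrite sqr_sqrtr // ED addr_ge0 // sqr_ge0.
- move=> [e1 [e2 [G [h1 h2]]]].
  have [a [b [c [nz [hr hw]]]]] := rel_of_geo G (or_introl (conj h1 h2)).
  have [w hw2] := hw (conj h1 h2).
  exists (a%:~R + b%:~R * conjc (Complex x y)); split.
    exact: (nz_char R x y hy a b).2 nz.
  split; first by apply/(isog_char R x y hy); exists a, b, c.
  exists `|w|.
  have [hn _] := norm_char hr.
  by rewrite hn hw2 sqrtr_sqr ratrC ratr_norm.
Qed.
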